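(* The generating function $$F_{(231,312)}(x,p,q,u,v,s,t)=\sum_{n\ge0}\ \sum_{\pi\in S_n(231,312)} x^n p^{\operatorname{asc}(\pi)}q^{\operatorname{des}(\pi)}u^{\operatorname{lrmax}(\pi)}v^{\operatorname{rlmax}(\pi)}s^{\operatorname{lrmin}(\pi)}t^{\operatorname{rlmin}(\pi)}$$ is equal to $\dfrac{A}{(1-qsx)(1-qx-ptux)(1-qvx)(1-qsvx)}$, where $$\begin{aligned}A={}&1 - p t u x + s t u v x + q^4 s^2 v^2 x^4 + q^3 s v x^3 \bigl(-1 - v + s (-1 + v (-1 + (-1 + p) t u x))\bigr)\\ &- q x \bigl(1 + v - p t u v x + s^2 t u v x (1 + p t u (-1 + v) x) + s (1 + v - p t u x - (-1 + p) t u v x + p t^2 u^2 v x^2 + t u v^2 x (1 - p t u x))\bigr)\\ &+ q^2 x^2 \bigl(v + s^2 v (1 + t u (1 - p + v) x) + s (1 + v^2 (1 - (-1 + p) t u x) + v (2 - p t u x))\bigr).\end{aligned}$$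
   Context: For $n\ge 0$, $S_n$ denotes the set of permutations $\pi=\pi_1\cdots\pi_n$ of $[n]=\{1,\dots,n\}$ ($S_0$ consists of the empty permutation, for which all statistics are $0$). $\pi$ avoids a pattern $\tau\in S_k$ if no subsequence $\pi_{i_1}\cdots\pi_{i_k}$ ($i_1<\dots<i_k$) satisfies $\pi_{i_a}<\pi_{i_b}\iff\tau_a<\tau_b$; $S_n(\tau,\rho)$ is the set of permutations in $S_n$ avoiding both $\tau$ and $\rho$. $\operatorname{asc}(\pi)$ (resp. $\operatorname{des}(\pi)$) is the number of $i\in[n-1]$ with $\pi_i<\pi_{i+1}$ (resp. $\pi_i>\pi_{i+1}$). $\pi_i$ is a left-to-right maximum (resp. minimum) if it is larger (resp. smaller) than every $\pi_j$ with $j<i$, and a right-to-left maximum (resp. minimum) if it is larger (resp. smaller) than every $\pi_j$ with $j>i$; $\operatorname{lrmax},\operatorname{lrmin},\operatorname{rlmax},\operatorname{rlmin}$ count these. *)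

(* Defs.v *)
From HB Require Import structures.
From mathcomp Require Import all_boot all_order all_algebra all_fingroup.
Set Implicit Arguments. Unset Strict Implicit. Unset Printing Implicit Defensive.
Import GRing.Theory.
Local Open Scope ring_scope.

(* One-line notation of a permutation s of 'I_n (values 0..n-1; shifting all
   values by 1 changes no statistic and no pattern occurrence). *)
Definition word n (s : 'S_n) : seq nat := [seq val (s i) | i <- enum 'I_n].

Definition contains n (s : 'S_n) (tau : seq nat) : bool :=
  [exists f : {ffun 'I_(size tau) -> 'I_n},
     [forall a : 'I_(size tau), forall b : 'I_(size tau),
        ((a < b)%N ==> (f a < f b)%N) &&
        (((s (f a)) < (s (f b)))%N == (nth 0 tau a < nth 0 tau b)%N)]].

Definition avoids n (s : 'S_n) (tau : seq nat) : bool := ~~ contains s tau.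

Definition asc n (s : 'S_n) : nat :=
  let w := word s in count (fun i => nth 0 w i < nth 0 w i.+1)%N (iota 0 n.-1).
Definition des n (s : 'S_n) : nat :=
  let w := word s in count (fun i => nth 0 w i > nth 0 w i.+1)%N (iota 0 n.-1).
Definition lrmax n (s : 'S_n) : nat :=
  let w := word s in
  count (fun i => all (fun j => nth 0 w j < nth 0 w i)%N (iota 0 i)) (iota 0 n).
Definition lrmin n (s : 'S_n) : nat :=
  let w := word s in
  count (fun i => all (fun j => nth 0 w j > nth 0 w i)%N (iota 0 i)) (iota 0 n).
Definition rlmax n (s : 'S_n) : nat :=
  let w := word s in
  count (fun i => all (fun j => nth 0 w j < nth 0 w i)%N (iota i.+1 (n - i.+1)))
        (iota 0 n).
Definition rlmin n (s : 'S_n) : nat :=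
  let w := word s in
  count (fun i => all (fun j => nth 0 w j > nth 0 w i)%N (iota i.+1 (n - i.+1)))
        (iota 0 n).

Definition Fcoef (R : comNzRingType) (p q u v s t : R) (n : nat) : R :=
  \sum_(pi : 'S_n | avoids pi [:: 2; 3; 1]%N && avoids pi [:: 3; 1; 2]%N)
     p ^+ asc pi * q ^+ des pi * u ^+ lrmax pi * v ^+ rlmax pi
       * s ^+ lrmin pi * t ^+ rlmin pi.

Definition Dpoly (R : comNzRingType) (p q u v s t : R) : {poly R} :=
  let x := 'X in
  let p := p%:P in let q := q%:P in let u := u%:P in
  let v := v%:P in let s := s%:P in let t := t%:P in
  (1 - q * s * x) * (1 - q * x - p * t * u * x) * (1 - q * v * x) * (1 - q * s * v * x).

Definition Apoly (R : comNzRingType) (p q u v s t : R) : {poly R} :=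
  let x := 'X in
  let p := p%:P in let q := q%:P in let u := u%:P in
  let v := v%:P in let s := s%:P in let t := t%:P in
  1 - p * t * u * x + s * t * u * v * x + q ^+ 4 * s ^+ 2 * v ^+ 2 * x ^+ 4
  + q ^+ 3 * s * v * x ^+ 3 * (- 1 - v + s * (- 1 + v * (- 1 + (- 1 + p) * t * u * x)))
  - q * x * (1 + v - p * t * u * v * x + s ^+ 2 * t * u * v * x * (1 + p * t * u * (- 1 + v) * x)
             + s * (1 + v - p * t * u * x - (- 1 + p) * t * u * v * x
                    + p * t ^+ 2 * u ^+ 2 * v * x ^+ 2 + t * u * v ^+ 2 * x * (1 - p * t * u * x)))
  + q ^+ 2 * x ^+ 2 * (v + s ^+ 2 * v * (1 + t * u * (1 - p + v) * x)
             + s * (1 + v ^+ 2 * (1 - (- 1 + p) * t * u * x) + v * (2 - p * t * u * x))).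

(* Main.v *)
Require Import Defs.
From HB Require Import structures.
From mathcomp Require Import all_boot all_order all_algebra all_fingroup.
From mathcomp Require Import zify ring.
Import GRing.Theory.
Set Implicit Arguments. Unset Strict Implicit. Unset Printing Implicit Defensive.

Definition W n (s : 'S_n) (i : nat) : nat := nth 0 (word s) i.

Lemma size_word n (s : 'S_n) : size (word s) = n.
Proof. by rewrite size_map size_enum_ord. Qed.

Lemma W_ord n (s : 'S_n) (i : 'I_n) : W s i = s i.
Proof. by rewrite /W /word (nth_map i 0) ?size_enum_ord // nth_ord_enum. Qed.

Lemma W_ge n (s : 'S_n) i : n <= i -> W s i = 0.
Proof. by move=> h; rewrite /W nth_default // size_word. Qed.

Lemma W_lt n (s : 'S_n) i : i < n -> W s i < n.
Proof. by move=> h; rewrite (W_ord s (Ordinal h)). Qed.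

Lemma W_inj n (s : 'S_n) i j : i < n -> j < n -> W s i = W s j -> i = j.
Proof.
move=> hi hj; rewrite (W_ord s (Ordinal hi)) (W_ord s (Ordinal hj)).
by move/val_inj/perm_inj => [].
Qed.

Lemma W_surj n (s : 'S_n) y : y < n -> exists2 k, k < n & W s k = y.
Proof.
move=> hy; exists (s^-1 (Ordinal hy))%g => //.
by rewrite W_ord permKV.
Qed.

Lemma W_ext n (s1 s2 : 'S_n) : (forall i, i < n -> W s1 i = W s2 i) -> s1 = s2.
Proof.
move=> h; apply/permP => i; apply/val_inj => /=; rewrite -!W_ord; exact: h.
Qed.

Section MK.
Variables (n : nat) (g : nat -> nat).
Hypothesis gB : forall i, i < n -> g i < n.
Hypothesis gI : forall i j, i < n -> j < n -> g i = g j -> i = j.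
Definition mkf (i : 'I_n) : 'I_n := Ordinal (gB (ltn_ord i)).
Lemma mkf_inj : injective mkf.
Proof. move=> a b /(congr1 val) /= /gI h; apply/val_inj; exact: h. Qed.
Definition mkperm : 'S_n := perm mkf_inj.
Lemma W_mkperm i : i < n -> W mkperm i = g i.
Proof. by move=> hi; rewrite (W_ord _ (Ordinal hi)) permE. Qed.
End MK.

Definition tightw (w : nat -> nat) n :=
  forall i k, i < k -> k < n -> w k < w i -> w i + i = w k + k.

Definition Aset n (s : 'S_n) := avoids s [:: 2; 3; 1]%N && avoids s [:: 3; 1; 2]%N.

Lemma contains_W n (s : 'S_n) tau :
  contains s tau -> exists f : 'I_(size tau) -> nat,
   (forall a, f a < n) /\ forall a b : 'I_(size tau), ((a < b)%N -> f a < f b) /\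
     ((W s (f a) < W s (f b)) = (nth 0 tau a < nth 0 tau b)).
Proof.
case/existsP => f /forallP H; exists (fun a => val (f a)); split => [a|a b]; first exact: ltn_ord.
move: (H a) => /forallP /(_ b) /andP [/implyP h1 /eqP h2]; split => //.
by rewrite !W_ord.
Qed.

Lemma tight_avoid n (s : 'S_n) : tightw (W s) n -> Aset s.
Proof.
move=> T; apply/andP; split; apply/negP => /contains_W [f [fB H]].
- have [h01 _] := H ord0 (inord 1); have [h12 _] := H (inord 1) (inord 2).
  have [_ e01] := H ord0 (inord 1); have [_ e21] := H (inord 2) (inord 1).
  have [_ e20] := H (inord 2) ord0.
  move: h01 h12 e01 e21 e20; rewrite /= !inordK //= => h01 h12 e01 e21 e20.
  have := h01 erefl; have := h12 erefl => {h01 h12} h12 h01.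
  have t1 := T _ _ (ltn_trans h01 h12) (fB _) ltac:(by rewrite e20).
  have t2 := T _ _ h12 (fB _) ltac:(by rewrite e21).
  move: e01; lia.
- have [h01 _] := H ord0 (inord 1); have [h12 _] := H (inord 1) (inord 2).
  have [_ e10] := H (inord 1) ord0; have [_ e12] := H (inord 1) (inord 2).
  have [_ e20] := H (inord 2) ord0.
  move: h01 h12 e10 e12 e20; rewrite /= !inordK //= => h01 h12 e10 e12 e20.
  have := h01 erefl; have := h12 erefl => {h01 h12} h12 h01.
  have t1 := T _ _ (ltn_trans h01 h12) (fB _) ltac:(by rewrite e20).
  have t2 := T _ _ h01 (fB _) ltac:(by rewrite e10).
  move: e12; lia.
Qed.

Lemma pat_gen n (s : 'S_n) tau i k j : size tau = 3 -> i < k -> k < j -> j < n ->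
  (W s i < W s k) = (nth 0 tau 0 < nth 0 tau 1) ->
  (W s k < W s i) = (nth 0 tau 1 < nth 0 tau 0) ->
  (W s i < W s j) = (nth 0 tau 0 < nth 0 tau 2) ->
  (W s j < W s i) = (nth 0 tau 2 < nth 0 tau 0) ->
  (W s k < W s j) = (nth 0 tau 1 < nth 0 tau 2) ->
  (W s j < W s k) = (nth 0 tau 2 < nth 0 tau 1) ->
  contains s tau.
Proof.
move=> st hik hkj hj e1 e2 e3 e4 e5 e6.
have hk := ltn_trans hkj hj; have hi := ltn_trans hik hk.
apply/existsP.
exists [ffun a : 'I_(size tau) => nth (Ordinal hi) [:: Ordinal hi; Ordinal hk; Ordinal hj] a].
apply/forallP => a; apply/forallP => b; rewrite !ffunE.
move: a b; rewrite st => a b.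
case: a b => [[|[|[|a]]] ha] [[|[|[|b]]] hb] //=. all: rewrite -!(W_ord s) /= ?ltnn ?e1 ?e2 ?e3 ?e4 ?e5 ?e6 ?eqxx ?andbT //. all: lia. Qed.


Lemma pat231 n (s : 'S_n) i k j : i < k -> k < j -> j < n ->
  W s j < W s i -> W s i < W s k -> contains s [:: 2; 3; 1]%N.
Proof. move=> h1 h2 h3 h4 h5; apply: (@pat_gen n s _ i k j) => //=; lia. Qed.

Lemma pat312 n (s : 'S_n) i k j : i < k -> k < j -> j < n ->
  W s k < W s j -> W s j < W s i -> contains s [:: 3; 1; 2]%N.
Proof. move=> h1 h2 h3 h4 h5; apply: (@pat_gen n s _ i k j) => //=; lia. Qed.

Lemma avoid_tight n (s : 'S_n) : Aset s -> tightw (W s) n.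
Proof.
case/andP => /negP A1 /negP A2.
have inj := @W_inj n s.
have T1 : forall i k j, i < k -> k < j -> j < n -> W s j < W s i ->
    W s j < W s k < W s i.
  move=> i k j hik hkj hj hji.
  have hk := ltn_trans hkj hj; have hi := ltn_trans hik hk.
  case: (ltngtP (W s k) (W s i)) => [h1|h1|/inj]; last by move=> /(_ hk hi); lia.
  - case: (ltngtP (W s k) (W s j)) => [h2|h2|/inj]; last by move=> /(_ hk hj); lia.
    + by case: A2; apply: (pat312 hik hkj hj).
    + by rewrite ?h1 ?h2 ?andbT.
  - by case: A1; apply: (pat231 hik hkj hj).
have T2 : forall i l j, i <= l -> l.+1 <= j -> j < n -> W s j < W s i ->
    W s l.+1 < W s l.
  move=> i l j hil hlj hj hji.
  have hl1 : l.+1 < n by lia.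
  have hl : l < n by lia.
  have Hl1 : W s l.+1 < W s i.
    case: (ltngtP l.+1 j) => [h|h|e].
    + by case/andP: (T1 i l.+1 j ltac:(lia) h hj hji).
    + lia.
    + by rewrite e.
  case: (ltngtP (W s l.+1) (W s l)) => [//|h|/inj]; last by move=> /(_ hl1 hl); lia.
  case: (ltngtP i l) => [h'|h'|e].
  - by case: A2; apply: (pat312 h' (ltnSn l) hl1).
  - lia.
  - subst l; lia.
have T3 : forall l, l.+1 < n -> W s l.+1 < W s l -> W s l = (W s l.+1).+1.
  move=> l hl1 hlt.
  have hl : l < n by lia.
  case: (ltngtP (W s l.+1).+1 (W s l)) => [h|h|//]; last lia.
  have hy : (W s l.+1).+1 < n by have := W_lt s hl; lia.
  case: (W_surj s hy) => m hm em.
  case: (ltngtP m l) => [h1|h1|e]; last by subst m; lia.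
  - by case: A1; apply: (pat231 h1 (ltnSn l) hl1); lia.
  - case: (ltngtP m l.+1) => [h2|h2|e]; [lia| |by subst m; lia].
    by case: A2; apply: (pat312 (ltnSn l) h2 hm); lia.
move=> i j hij hj hji.
suff H : forall d, i + d <= j -> W s i + i = W s (i + d) + (i + d).
  by have := H (j - i) ltac:(lia); rewrite subnKC // ltnW.
elim=> [|d IH] hd; first by rewrite addn0.
rewrite IH; last lia.
have h1 : (i + d).+1 < n by lia.
have h2 := T2 i (i + d) j ltac:(lia) ltac:(lia) hj hji.
have := T3 _ h1 h2; rewrite addnS; lia.
Qed.

Lemma count_split (P : pred nat) a b :
  count P (iota 0 (a + b)) = count P (iota 0 a) + count (fun i => P (a + i)) (iota 0 b).
Proof. by rewrite iotaD count_cat add0n -[in iota a b](addn0 a) iotaDl count_map. Qed.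

Lemma all_split (P : pred nat) a b :
  all P (iota 0 (a + b)) = all P (iota 0 a) && all (fun i => P (a + i)) (iota 0 b).
Proof. by rewrite iotaD all_cat add0n -[in iota a b](addn0 a) iotaDl all_map. Qed.

Lemma count_iota0 (P : pred nat) a : (forall i, i < a -> ~~ P i) -> count P (iota 0 a) = 0.
Proof.
move=> h; rewrite (eq_in_count (a2 := pred0)) ?count_pred0 // => i.
rewrite mem_iota add0n => /andP [_ /h]; exact: negbTE.
Qed.

Lemma count_iotaT (P : pred nat) a : (forall i, i < a -> P i) -> count P (iota 0 a) = a.
Proof.
move=> h; rewrite (eq_in_count (a2 := predT)) ?count_predT ?size_iota // => i.
by rewrite mem_iota add0n => /andP [_ /h].
Qed.

Lemma count_ext (P Q : pred nat) a : (forall i, i < a -> P i = Q i) ->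
  count P (iota 0 a) = count Q (iota 0 a).
Proof. move=> h; apply: eq_in_count => i; rewrite mem_iota add0n => /andP [_ /h] //. Qed.

Lemma all_ext (P Q : pred nat) a b : (forall i, a <= i < a + b -> P i = Q i) ->
  all P (iota a b) = all Q (iota a b).
Proof. move=> h; apply: eq_in_all => i; rewrite mem_iota => /h //. Qed.

Lemma all_iotaT (P : pred nat) a b : (forall i, a <= i < a + b -> P i) -> all P (iota a b).
Proof. by move=> h; apply/allP => i; rewrite mem_iota => /h. Qed.

Lemma all_iotaF (P : pred nat) a b k : a <= k < a + b -> ~~ P k -> all P (iota a b) = false.
Proof. move=> hk hP; apply/negbTE/allPn; exists k => //; by rewrite mem_iota. Qed.

Definition ascw (w : nat -> nat) n := count (fun i => w i < w i.+1) (iota 0 n.-1).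
Definition desw (w : nat -> nat) n := count (fun i => w i > w i.+1) (iota 0 n.-1).
Definition lrmaxw (w : nat -> nat) n :=
  count (fun i => all (fun k => w k < w i) (iota 0 i)) (iota 0 n).
Definition lrminw (w : nat -> nat) n :=
  count (fun i => all (fun k => w k > w i) (iota 0 i)) (iota 0 n).
Definition rlmaxw (w : nat -> nat) n :=
  count (fun i => all (fun k => w k < w i) (iota i.+1 (n - i.+1))) (iota 0 n).
Definition rlminw (w : nat -> nat) n :=
  count (fun i => all (fun k => w k > w i) (iota i.+1 (n - i.+1))) (iota 0 n).

Lemma asc_w n (s : 'S_n) : asc s = ascw (W s) n. Proof. by []. Qed.
Lemma des_w n (s : 'S_n) : des s = desw (W s) n. Proof. by []. Qed.
Lemma lrmax_w n (s : 'S_n) : lrmax s = lrmaxw (W s) n. Proof. by []. Qed.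
Lemma lrmin_w n (s : 'S_n) : lrmin s = lrminw (W s) n. Proof. by []. Qed.
Lemma rlmax_w n (s : 'S_n) : rlmax s = rlmaxw (W s) n. Proof. by []. Qed.
Lemma rlmin_w n (s : 'S_n) : rlmin s = rlminw (W s) n. Proof. by []. Qed.

Section Ext.
Variables (w1 w2 : nat -> nat) (n : nat).
Hypothesis e : forall i, i < n -> w1 i = w2 i.
Lemma ascw_ext : ascw w1 n = ascw w2 n.
Proof. apply: count_ext => i hi; rewrite !e //; lia. Qed.
Lemma desw_ext : desw w1 n = desw w2 n.
Proof. apply: count_ext => i hi; rewrite !e //; lia. Qed.
Lemma lrmaxw_ext : lrmaxw w1 n = lrmaxw w2 n.
Proof. apply: count_ext => i hi; apply: all_ext => k hk; rewrite !e //; lia. Qed.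
Lemma lrminw_ext : lrminw w1 n = lrminw w2 n.
Proof. apply: count_ext => i hi; apply: all_ext => k hk; rewrite !e //; lia. Qed.
Lemma rlmaxw_ext : rlmaxw w1 n = rlmaxw w2 n.
Proof. apply: count_ext => i hi; apply: all_ext => k hk; rewrite !e //; lia. Qed.
Lemma rlminw_ext : rlminw w1 n = rlminw w2 n.
Proof. apply: count_ext => i hi; apply: all_ext => k hk; rewrite !e //; lia. Qed.
End Ext.

Definition dsg j (w : nat -> nat) i := if i < j then j.-1 - i else j + w (i - j).

Lemma dsg_lo j w i : i < j -> dsg j w i = j.-1 - i.
Proof. by move=> h; rewrite /dsg h. Qed.
Lemma dsg_hi j w i : dsg j w (j + i) = j + w i.
Proof. by rewrite /dsg ifF ?addKn //; lia. Qed.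

Lemma dsg_hi' j w k : j <= k -> dsg j w k = j + w (k - j).
Proof. by move=> h; rewrite -{1}(subnKC h) dsg_hi. Qed.

Section DsStats.
Variables (j' m' : nat) (w : nat -> nat).
Local Notation j := j'.+1.
Local Notation g := (dsg j w).

Lemma asc_ds : ascw g (j + m'.+1) = (ascw w m'.+1).+1.
Proof.
rewrite /ascw (_ : (j + m'.+1).-1 = j' + (1 + m')); last lia.
rewrite count_split count_iota0 ?add0n; last first.
  by move=> i hi; rewrite !dsg_lo; lia.
rewrite count_split /= !addn0.
have e1 : g j' = 0 by rewrite dsg_lo // subnn.
have e2 : g j'.+1 = j + w 0 by move: (dsg_hi j w 0); rewrite addn0.
rewrite e1 e2 /= add1n; congr _.+1; apply: count_ext => i hi.
rewrite (_ : j' + (1 + i) = j + i); last lia.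
rewrite -addnS !dsg_hi; lia.
Qed.

Lemma des_ds : desw g (j + m'.+1) = desw w m'.+1 + j'.
Proof.
rewrite /desw (_ : (j + m'.+1).-1 = j' + (1 + m')); last lia.
rewrite count_split count_iotaT; last first.
  by move=> i hi; rewrite !dsg_lo; lia.
rewrite count_split /= !addn0.
have e1 : g j' = 0 by rewrite dsg_lo // subnn.
have e2 : g j'.+1 = j + w 0 by move: (dsg_hi j w 0); rewrite addn0.
rewrite e1 e2 /= add0n addnC; congr (_ + _); apply: count_ext => i hi.
rewrite (_ : j' + (1 + i) = j + i); last lia.
rewrite -addnS !dsg_hi; lia.
Qed.

Lemma lrmax_ds m : lrmaxw g (j + m) = (lrmaxw w m).+1.
Proof.
rewrite /lrmaxw count_split -[RHS]add1n; congr (_ + _).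
  have -> : iota 0 j = iota 0 (1 + j') by [].
  rewrite count_split [X in _ + X]count_iota0 ?addn0 //.
  move=> i hi; rewrite (all_iotaF (k := 0)) //.
  by rewrite !dsg_lo; lia.
apply: count_ext => i hi; rewrite all_split all_iotaT /=; last first.
  by move=> k hk; rewrite dsg_lo ?dsg_hi; lia.
apply: all_ext => k hk; rewrite !dsg_hi; lia.
Qed.

Lemma lrmin_ds m : lrminw g (j + m) = j.
Proof.
rewrite /lrminw count_split count_iotaT; last first.
  by move=> i hi; apply: all_iotaT => k hk; rewrite !dsg_lo; lia.
rewrite count_iota0 ?addn0 // => i hi.
rewrite (all_iotaF (k := 0)); [done | lia | ].
by rewrite dsg_hi dsg_lo //; lia.
Qed.

Lemma rlmax_ds : rlmaxw g (j + m'.+1) = rlmaxw w m'.+1.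
Proof.
rewrite /rlmaxw count_split count_iota0 ?add0n; last first.
  move=> i hi; rewrite (all_iotaF (k := j)); [done | lia | ].
  by rewrite (dsg_lo _ hi) dsg_hi' //; lia.
apply: count_ext => i hi.
rewrite (_ : j + m'.+1 - (j + i).+1 = m'.+1 - i.+1); last lia.
rewrite -addnS iotaDl all_map; apply: eq_all => k /=; rewrite !dsg_hi; lia.
Qed.

Lemma rlmin_ds : rlminw g (j + m'.+1) = (rlminw w m'.+1).+1.
Proof.
rewrite /rlminw count_split -[RHS]add1n; congr (_ + _).
  have -> : iota 0 j = iota 0 (j' + 1) by rewrite addn1.
  rewrite count_split count_iota0 /=.
    rewrite addn0 all_iotaT // => k hk.
    rewrite addn0 (dsg_lo _ (ltnSn j')) dsg_hi'; lia.
  move=> i hi; rewrite (all_iotaF (k := i.+1)); [done | lia | ].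
  by rewrite !dsg_lo; lia.
apply: count_ext => i hi.
rewrite (_ : j + m'.+1 - (j + i).+1 = m'.+1 - i.+1); last lia.
rewrite -addnS iotaDl all_map; apply: eq_all => k /=; rewrite !dsg_hi; lia.
Qed.

Lemma asc_dec : ascw g j = 0.
Proof. rewrite /ascw /= count_iota0 // => i hi; rewrite !dsg_lo; lia. Qed.
Lemma des_dec : desw g j = j'.
Proof. rewrite /desw /= count_iotaT // => i hi; rewrite !dsg_lo; lia. Qed.
Lemma rlmax_dec : rlmaxw g j = j.
Proof.
rewrite /rlmaxw count_iotaT // => i hi; apply: all_iotaT => k hk.
rewrite !dsg_lo; lia.
Qed.
Lemma rlmin_dec : rlminw g j = 1.
Proof.
rewrite /rlminw; have -> : iota 0 j = iota 0 (j' + 1) by rewrite addn1.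
rewrite count_split count_iota0 /=.
  by rewrite !addn0 subnn.
move=> i hi; rewrite (all_iotaF (k := i.+1)); [done | lia | ].
by rewrite !dsg_lo; lia.
Qed.
End DsStats.

Lemma dsgB n j (hj : j <= n) (σ : 'S_(n - j)) i : i < n -> dsg j (W σ) i < n.
Proof.
rewrite /dsg; case: ifP => h hi; first lia.
have := @W_lt _ σ (i - j) ltac:(lia); lia.
Qed.

Lemma dsgI n j (hj : j <= n) (σ : 'S_(n - j)) i k :
  i < n -> k < n -> dsg j (W σ) i = dsg j (W σ) k -> i = k.
Proof.
rewrite /dsg => hi hk; case: ifP => h1; case: ifP => h2; try lia.
move=> e; have := @W_inj _ σ (i - j) (k - j) ltac:(lia) ltac:(lia) ltac:(lia); lia.
Qed.

Definition ds n j (hj : j <= n) (σ : 'S_(n - j)) : 'S_n :=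
  mkperm (@dsgB n j hj σ) (@dsgI n j hj σ).

Lemma W_ds n j (hj : j <= n) (σ : 'S_(n - j)) i : i < n -> W (ds hj σ) i = dsg j (W σ) i.
Proof. exact: W_mkperm. Qed.

Lemma ds_inj n j (hj : j <= n) : injective (@ds n j hj).
Proof.
move=> s1 s2 e; apply: W_ext => i hi.
have := W_ds hj s1 (i := j + i) ltac:(lia); rewrite e W_ds ?dsg_hi; last lia.
lia.
Qed.

Lemma tight_ds n j (hj : j <= n) (σ : 'S_(n - j)) :
  tightw (W σ) (n - j) -> tightw (W (ds hj σ)) n.
Proof.
move=> T i k hik hk; rewrite (W_ds _ _ hk) (W_ds _ _ (ltn_trans hik hk)).
rewrite /dsg; case: ifP => h1; case: ifP => h2; try lia.
move=> hlt; have := T (i - j) (k - j) ltac:(lia) ltac:(lia) ltac:(lia); lia.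
Qed.

Lemma ds_surj n j (hj : j <= n) (pi : 'S_n) : 0 < j -> tightw (W pi) n ->
  W pi 0 = j.-1 -> exists2 σ : 'S_(n - j), tightw (W σ) (n - j) & pi = ds hj σ.
Proof.
move=> j0 T e0.
have hb : forall i, j <= i -> i < n -> j <= W pi i.
  move=> i hi hin; case: (ltngtP (W pi i) (W pi 0)) => [h|h|e].
  - have := T 0 i ltac:(lia) hin h; lia.
  - lia.
  - have := @W_inj _ pi i 0 hin ltac:(lia) e; lia.
have ha : forall i, i < j -> W pi i = j.-1 - i.
  move=> i hi; case: (posnP i) => [->|ip]; first by rewrite e0 subn0.
  have hy : j.-1 - i < n by lia.
  case: (W_surj pi hy) => k hk ek.
  case: (posnP k) => [k0|kp].
    by move: ek; rewrite k0 e0; lia.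
  have := T 0 k kp hk ltac:(lia); rewrite ek e0 => e.
  by rewrite (_ : i = k) ?ek //; lia.
pose g i := W pi (i + j) - j.
have gB : forall i, i < n - j -> g i < n - j.
  by move=> i hi; have := @W_lt _ pi (i + j) ltac:(lia); rewrite /g; lia.
have gI : forall i k, i < n - j -> k < n - j -> g i = g k -> i = k.
  move=> i k hi hk; rewrite /g => e.
  have h1 := hb (i + j) ltac:(lia) ltac:(lia).
  have h2 := hb (k + j) ltac:(lia) ltac:(lia).
  have := @W_inj _ pi (i + j) (k + j) ltac:(lia) ltac:(lia) ltac:(lia); lia.
exists (mkperm gB gI).
  move=> i k hik hk; rewrite !W_mkperm //; last lia.
  rewrite /g => hlt.
  have h1 := hb (i + j) ltac:(lia) ltac:(lia).
  have h2 := hb (k + j) ltac:(lia) ltac:(lia).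
  have := T (i + j) (k + j) ltac:(lia) ltac:(lia) ltac:(lia); lia.
apply: W_ext => i hi; rewrite W_ds // /dsg; case: ifP => h; first exact: ha.
rewrite W_mkperm; last lia.
rewrite /g subnK; last lia.
have := hb i ltac:(lia) hi; lia.
Qed.

Local Open Scope ring_scope.

Definition wt (R : comNzRingType) (p q u v s t : R) n (pi : 'S_n) : R :=
  p ^+ asc pi * q ^+ des pi * u ^+ lrmax pi * v ^+ rlmax pi
       * s ^+ lrmin pi * t ^+ rlmin pi.

Lemma Fcoef_wt (R : comNzRingType) (p q u v s t : R) n :
  Fcoef p q u v s t n = \sum_(pi : 'S_n | Aset pi) wt p q u v s t pi.
Proof. by []. Qed.

Lemma block_sum (R : comNzRingType) n c (hc : (c < n)%N) (F : 'S_n -> R) :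
  \sum_(pi : 'S_n | Aset pi && (W pi 0 == c)%N) F pi
  = \sum_(σ : 'S_(n - c.+1)%N | Aset σ) F (ds hc σ).
Proof.
transitivity (\sum_(σ in [set σ : 'S_(n - c.+1)%N | Aset σ]) F (ds hc σ)); last first.
  by apply: eq_bigl => σ; rewrite inE.
rewrite -(big_imset (h := ds hc)); last by move=> x y _ _; exact: ds_inj.
apply: eq_bigl => pi; apply/andP/imsetP.
- case=> A0 /eqP e0; have T := avoid_tight A0.
  case: (@ds_surj n c.+1 hc pi) => // σ Tσ ->.
  by exists σ => //; rewrite inE; exact: tight_avoid.
- case=> σ; rewrite inE => Aσ ->; split.
    exact: tight_avoid (tight_ds (avoid_tight Aσ)).
  by rewrite W_ds ?dsg_lo ?subn0 //; lia.
Qed.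


Lemma asc_dsN j' w N M : N = (j'.+1 + M)%N -> (0 < M)%N -> ascw (dsg j'.+1 w) N = (ascw w M).+1.
Proof. by move=> ->; case: M => // m' _; exact: asc_ds. Qed.
Lemma des_dsN j' w N M : N = (j'.+1 + M)%N -> (0 < M)%N -> desw (dsg j'.+1 w) N = (desw w M + j')%N.
Proof. by move=> ->; case: M => // m' _; exact: des_ds. Qed.
Lemma lrmax_dsN j' w N M : N = (j'.+1 + M)%N -> lrmaxw (dsg j'.+1 w) N = (lrmaxw w M).+1.
Proof. by move=> ->; exact: lrmax_ds. Qed.
Lemma lrmin_dsN j' w N M : N = (j'.+1 + M)%N -> lrminw (dsg j'.+1 w) N = j'.+1.
Proof. by move=> ->; exact: lrmin_ds. Qed.
Lemma rlmax_dsN j' w N M : N = (j'.+1 + M)%N -> (0 < M)%N -> rlmaxw (dsg j'.+1 w) N = rlmaxw w M.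
Proof. by move=> ->; case: M => // m' _; exact: rlmax_ds. Qed.
Lemma rlmin_dsN j' w N M : N = (j'.+1 + M)%N -> (0 < M)%N -> rlminw (dsg j'.+1 w) N = (rlminw w M).+1.
Proof. by move=> ->; case: M => // m' _; exact: rlmin_ds. Qed.
Lemma asc_decN j' w N : N = j'.+1 -> ascw (dsg j'.+1 w) N = 0%N.
Proof. by move=> ->; exact: asc_dec. Qed.
Lemma des_decN j' w N : N = j'.+1 -> desw (dsg j'.+1 w) N = j'.
Proof. by move=> ->; exact: des_dec. Qed.
Lemma rlmax_decN j' w N : N = j'.+1 -> rlmaxw (dsg j'.+1 w) N = j'.+1.
Proof. by move=> ->; exact: rlmax_dec. Qed.
Lemma rlmin_decN j' w N : N = j'.+1 -> rlminw (dsg j'.+1 w) N = 1%N.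
Proof. by move=> ->; exact: rlmin_dec. Qed.


Lemma wt_ds (R : comNzRingType) (p q u v s t : R) n c (hc : (c < n)%N)
  (σ : 'S_(n - c.+1)%N) : (0 < n - c.+1)%N ->
  wt p q u v s t (ds hc σ) = s ^+ c.+1 * q ^+ c * (p * u * t) * wt p q u v 1 t σ.
Proof.
move=> hm; have e : n = (c.+1 + (n - c.+1))%N by lia.
rewrite /wt !asc_w !des_w !lrmax_w !rlmax_w !lrmin_w !rlmin_w.
rewrite (ascw_ext (@W_ds n c.+1 hc σ)) (desw_ext (@W_ds n c.+1 hc σ)).
rewrite (lrmaxw_ext (@W_ds n c.+1 hc σ)) (lrminw_ext (@W_ds n c.+1 hc σ)).
rewrite (rlmaxw_ext (@W_ds n c.+1 hc σ)) (rlminw_ext (@W_ds n c.+1 hc σ)).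
rewrite (asc_dsN _ e hm) (des_dsN _ e hm) (lrmax_dsN _ e) (lrmin_dsN _ e).
rewrite (rlmax_dsN _ e hm) (rlmin_dsN _ e hm).
rewrite !exprS exprD expr1n; ring.
Qed.

Lemma wt_dec (R : comNzRingType) (p q u v s t : R) n c (hc : (c < n)%N)
  (σ : 'S_(n - c.+1)%N) : n = c.+1 ->
  wt p q u v s t (ds hc σ) = u * t * q ^+ c * (s * v) ^+ c.+1.
Proof.
move=> hn; have e : n = (c.+1 + 0)%N by lia.
have M0 : (0 = 0)%N by [].
rewrite /wt !asc_w !des_w !lrmax_w !rlmax_w !lrmin_w !rlmin_w.
rewrite (ascw_ext (@W_ds n c.+1 hc σ)) (desw_ext (@W_ds n c.+1 hc σ)).
rewrite (lrmaxw_ext (@W_ds n c.+1 hc σ)) (lrminw_ext (@W_ds n c.+1 hc σ)).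
rewrite (rlmaxw_ext (@W_ds n c.+1 hc σ)) (rlminw_ext (@W_ds n c.+1 hc σ)).
rewrite (asc_decN _ hn) (des_decN _ hn) (lrmax_dsN _ e) (lrmin_dsN _ e).
rewrite (rlmax_decN _ hn) (rlmin_decN _ hn) /=.
rewrite exprMn !expr1 expr0; ring.
Qed.

Lemma sum_S0 (R : comNzRingType) m (F : 'S_m -> R) : m = 0%N ->
  \sum_(σ : 'S_m | Aset σ) F σ = F 1%g.
Proof.
move=> m0; apply: big_pred1 => σ /=.
have -> : σ = 1%g by apply/permP => i; have := ltn_ord i; rewrite {2}m0.
rewrite eqxx; apply: tight_avoid => i k _ hk; lia.
Qed.

Lemma Fcoef0 (R : comNzRingType) (p q u v s t : R) : Fcoef p q u v s t 0 = 1.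
Proof. by rewrite Fcoef_wt sum_S0 // /wt !expr0 !mulr1. Qed.

Lemma peel (R : comNzRingType) (p q u v s t : R) n' :
  Fcoef p q u v s t n'.+1 = u * t * q ^+ n' * (s * v) ^+ n'.+1
   + \sum_(c < n') s ^+ c.+1 * q ^+ c * (p * u * t) * Fcoef p q u v 1 t (n' - c).
Proof.
rewrite Fcoef_wt (partition_big (fun pi : 'S_n'.+1 => pi ord0) predT) //=.
rewrite big_ord_recr /= addrC; congr (_ + _).
  rewrite (eq_bigl (fun pi : 'S_n'.+1 => Aset pi && (W pi 0 == n')%N)); last first.
    by move=> pi /=; rewrite -val_eqE /= -(W_ord pi ord0).
  rewrite (block_sum (ltnSn n')) sum_S0 ?subnn // wt_dec //.
apply: eq_bigr => c _.
have hc : (c < n'.+1)%N by apply: leqW.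
rewrite (eq_bigl (fun pi : 'S_n'.+1 => Aset pi && (W pi 0 == c)%N)); last first.
  by move=> pi /=; rewrite -val_eqE /= -(W_ord pi ord0).
rewrite (block_sum hc) Fcoef_wt big_distrr /=.
apply: eq_bigr => σ _; rewrite wt_ds; [reflexivity | have := ltn_ord c; lia].
Qed.

Local Open Scope ring_scope.

Section Alg.
Variables (R : comNzRingType) (N : nat).
Definition eqm (P Q : {poly R}) := forall i, (i <= N)%N -> P`_i = Q`_i.

Lemma eqm_refl P : eqm P P. Proof. by []. Qed.
Lemma eqm_eq P Q : P = Q -> eqm P Q. Proof. by move=> ->. Qed.
Lemma eqm_sym P Q : eqm P Q -> eqm Q P. Proof. by move=> h i hi; rewrite h. Qed.
Lemma eqm_trans P Q S : eqm P Q -> eqm Q S -> eqm P S.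
Proof. by move=> h1 h2 i hi; rewrite h1 // h2. Qed.
Lemma eqmD P1 Q1 P2 Q2 : eqm P1 Q1 -> eqm P2 Q2 -> eqm (P1 + P2) (Q1 + Q2).
Proof. by move=> h1 h2 i hi; rewrite !coefD h1 // h2. Qed.
Lemma eqmM P1 Q1 P2 Q2 : eqm P1 Q1 -> eqm P2 Q2 -> eqm (P1 * P2) (Q1 * Q2).
Proof.
move=> h1 h2 i hi; rewrite !coefM; apply: eq_bigr => k _.
have hk := ltn_ord k; rewrite h1 ?h2 //; lia.
Qed.

Definition Geo (a : R) : {poly R} := \poly_(i < N.+1) a ^+ i.

Lemma geoK a : eqm ((1 - a%:P * 'X) * Geo a) 1.
Proof.
move=> i hi; rewrite mulrBl mul1r coefB -mulrA coefCM coefXM coef1 /Geo coef_poly.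
case: i hi => [|k] hk /=; first by rewrite expr0 mulr0 subr0.
by rewrite coef_poly ltnS hk ltnW // exprS subrr. Qed.
End Alg.

Section Rec.
Variables (R : comNzRingType) (N : nat) (p q u v s t : R).
Local Notation tr s := (\poly_(i < N.+1) Fcoef p q u v s t i).

Lemma recF : eqm N (tr s - 1)
  ((t * u * s * v)%:P * ('X * Geo N (q * s * v))
   + (p * u * t * s)%:P * ('X * (Geo N (q * s) * (tr 1 - 1)))).
Proof.
move=> i hi; rewrite coefB coefD !coefCM !coefXM coef1 coef_poly ltnS hi.
case: i hi => [|k] hk /=; first by rewrite Fcoef0 subrr !mulr0 addr0.
rewrite subr0 peel coefM big_ord_recr /= subnn coefB coef1 coef_poly /=.
rewrite [(tr 1)`_0]coef_poly /= Fcoef0 subrr mulr0 addr0 ltnS (ltnW hk).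
rewrite big_distrr /=; congr (_ + _).
  by rewrite !exprMn !exprS; ring.
apply: eq_bigr => c _; have hc := ltn_ord c.
rewrite coef_poly ltnS (ltnW (ltn_trans hc hk)) coefB coef_poly coef1.
rewrite ifT; last lia.
rewrite subn_eq0 leqNgt hc /=.
by rewrite ?mulr0n subr0 !exprMn !exprS; ring.
Qed.
End Rec.

Local Open Scope ring_scope.

Section Final.
Variables (R : comNzRingType) (N : nat) (p q u v s t : R).
Local Notation tr s := (\poly_(i < N.+1) Fcoef p q u v s t i).
Local Notation x := ('X : {poly R}).
Local Notation L1 := (1 - (q * v)%:P * x).
Local Notation L2 := (1 - q%:P * x).
Local Notation L3 := (1 - (q * s)%:P * x).
Local Notation L4 := (1 - (q * s * v)%:P * x).
Local Notation Lr := (L2 - (p * u * t)%:P * x).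
Local Notation g := (tr 1 - 1).
Local Notation f := (tr s - 1).

Lemma Hg2 : eqm N (L1 * Lr * g) ((t * u * v)%:P * x * L2).
Proof.
have HG := @recF _ N p q u v 1 t; rewrite !mulr1 in HG.
have Hg1 : eqm N (L1 * L2 * g) ((t * u * v)%:P * x * L2 + (p * u * t)%:P * x * L1 * g).
  apply: eqm_trans (eqmM (@eqm_refl _ N (L1 * L2)) HG) _.
  apply: eqm_trans (@eqm_eq _ N _ _ (_ : _ = (t * u * v)%:P * x * L2 * (L1 * Geo N (q * v))
      + (p * u * t)%:P * x * L1 * g * (L2 * Geo N q))) _; first by ring.
  apply: eqm_trans (eqmD (eqmM (@eqm_refl _ N _) (@geoK _ N _)) (eqmM (@eqm_refl _ N _) (@geoK _ N _))) _.
  by apply: (@eqm_eq _ N); ring.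
apply: eqm_trans (@eqm_eq _ N _ _ _) (eqm_trans (eqmD Hg1 (@eqm_refl _ N (- ((p * u * t)%:P * x * L1 * g)))) (@eqm_eq _ N _ _ _)).
  by ring.
by ring.
Qed.

Lemma Hf1 : eqm N (L4 * L3 * f)
   ((t * u * s * v)%:P * x * L3 + (p * u * t * s)%:P * x * L4 * g).
Proof.
have HF := @recF _ N p q u v s t.
apply: eqm_trans (eqmM (@eqm_refl _ N (L4 * L3)) HF) _.
apply: eqm_trans (@eqm_eq _ N _ _ (_ : _ = (t * u * s * v)%:P * x * L3 * (L4 * Geo N (q * s * v))
    + (p * u * t * s)%:P * x * L4 * g * (L3 * Geo N (q * s)))) _; first by ring.
apply: eqm_trans (eqmD (eqmM (@eqm_refl _ N _) (@geoK _ N _)) (eqmM (@eqm_refl _ N _) (@geoK _ N _))) _.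
by apply: (@eqm_eq _ N); ring.
Qed.

Lemma final : eqm N (Dpoly p q u v s t * tr s) (Apoly p q u v s t).
Proof.
apply: eqm_trans (@eqm_eq _ N _ _ (_ : _ = Dpoly p q u v s t + L1 * Lr * (L4 * L3 * f))) _.
  by rewrite /Dpoly /= !polyCM; ring.
apply: eqm_trans (eqmD (@eqm_refl _ N _) (eqmM (@eqm_refl _ N _) Hf1)) _.
apply: eqm_trans (@eqm_eq _ N _ _ (_ : _ = Dpoly p q u v s t
   + (t * u * s * v)%:P * x * L3 * L1 * Lr + (p * u * t * s)%:P * x * L4 * (L1 * Lr * g))) _.
  by ring.
apply: eqm_trans (eqmD (@eqm_refl _ N _) (eqmM (@eqm_refl _ N _) Hg2)) _.
by apply: (@eqm_eq _ N); rewrite /Dpoly /Apoly /= !polyCM; ring.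
Qed.
End Final.

Theorem theorem7 (R : comNzRingType) (p q u v s t : R) (N : nat) :
  \sum_(i < N.+1) (Dpoly p q u v s t)`_i * Fcoef p q u v s t (N - i)
  = (Apoly p q u v s t)`_N.
Proof.
rewrite -(@final _ N p q u v s t N (leqnn N)) coefM; apply: eq_bigr => i _.
by rewrite coef_poly ifT //; have := ltn_ord i; lia.
Qed.
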